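(* Let $\mathbf{k}$ be a field and let $p\in\mathbf{k}[y]$ satisfy: for all $\alpha,\beta,\gamma\in\mathbf{k}$, if $\deg[p(y)-\alpha p(\beta y+\gamma)]\le 1$ then $\alpha=\beta=1$ and $\gamma=0$. Let $\sigma=(y,x)$, $t=(-x+p(y),y)$ and $f=(\sigma\circ t)^2\circ\sigma\circ(t\circ\sigma)^2$ in $\mathrm{Aut}(\mathbb{A}^2_{\mathbf{k}})$. Then the subgroup $\langle B,f\rangle$ generated by $B$ and $f$ is strictly contained in $\mathrm{Aut}(\mathbb{A}^2_{\mathbf{k}})$.
   Context: $\mathrm{Aut}(\mathbb{A}^2_{\mathbf{k}})$ is the group of polynomial automorphisms $(f_1,f_2)$ of the affine plane over $\mathbf{k}$, with composition $g\circ f=(g_1(f_1,f_2),g_2(f_1,f_2))$. $B=\{(ax+q(y),\,b'y+c'): a,b'\in\mathbf{k}^*,\ c'\in\mathbf{k},\ q\in\mathbf{k}[y]\}$ is the Jonquières subgroup. *)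

(* Defs.v *)
From HB Require Import structures.
From mathcomp Require Import all_boot all_order all_algebra.
From mathcomp Require Import mpoly.
Set Implicit Arguments. Unset Strict Implicit. Unset Printing Implicit Defensive.
Import GRing.Theory.
Local Open Scope ring_scope.

(* Bivariate polynomials k[x,y]: variable x = 'X_0, y = 'X_1. *)
Definition pol2 (k : fieldType) := {mpoly k[2]}.
Definition endo2 (k : fieldType) := (pol2 k * pol2 k)%type.

Definition X2 (k : fieldType) : pol2 k := 'X_(@ord0 1).
Definition Y2 (k : fieldType) : pol2 k := 'X_(@ord_max 1).

Definition comp2 (k : fieldType) (g f : endo2 k) : endo2 k :=
  (comp_mpoly [tuple f.1; f.2] g.1, comp_mpoly [tuple f.1; f.2] g.2).

Definition id2 (k : fieldType) : endo2 k := (X2 k, Y2 k).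

Definition inverse2 (k : fieldType) (f g : endo2 k) : Prop :=
  comp2 g f = id2 k /\ comp2 f g = id2 k.

Definition is_aut2 (k : fieldType) (f : endo2 k) : Prop :=
  exists g, inverse2 f g.

Definition polY (k : fieldType) (q : {poly k}) : pol2 k :=
  \sum_(i < size q) q`_i *: Y2 k ^+ i.

Definition in_B (k : fieldType) (h : endo2 k) : Prop :=
  exists (a b' c' : k) (q : {poly k}), a != 0 /\ b' != 0 /\
    h = (a *: X2 k + polY q, b' *: Y2 k + c'%:MP).

(* subgroup of Aut(A^2) generated by the set S (S assumed inside Aut) *)
Inductive gen2 (k : fieldType) (S : endo2 k -> Prop) : endo2 k -> Prop :=
  | gen2_base h : S h -> gen2 S h
  | gen2_id : gen2 S (id2 k)
  | gen2_comp g h : gen2 S g -> gen2 S h -> gen2 S (comp2 g h)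
  | gen2_inv h g : gen2 S h -> inverse2 h g -> gen2 S g.

Definition sigma2 (k : fieldType) : endo2 k := (Y2 k, X2 k).
Definition t2 (k : fieldType) (p : {poly k}) : endo2 k := (- X2 k + polY p, Y2 k).

Definition f44 (k : fieldType) (p : {poly k}) : endo2 k :=
  let st := comp2 (sigma2 k) (t2 p) in
  let ts := comp2 (t2 p) (sigma2 k) in
  comp2 (comp2 st st) (comp2 (sigma2 k) (comp2 ts ts)).

(* Main.v *)
Require Import Defs.
From HB Require Import structures.
From mathcomp Require Import all_boot all_order all_algebra.
From mathcomp Require Import mpoly.
From mathcomp Require Import zify ring.
Import GRing.Theory.
Local Open Scope ring_scope.
Set Implicit Arguments. Unset Strict Implicit. Unset Printing Implicit Defensive.

Section Words.
Variable T : Type.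
Variable op : T -> T -> T.
Variable e : T.
Hypothesis opA : forall x y z, op x (op y z) = op (op x y) z.
Hypothesis op1 : forall x, op e x = x.
Hypothesis op1r : forall x, op x e = x.
Variable inBp : T -> Prop.
Variable ff : T.
Hypothesis ffK : op ff ff = e.
Hypothesis idB : inBp e.
Hypothesis invB : forall x, inBp x -> exists y, [/\ inBp y, op x y = e & op y x = e].
Hypothesis compB : forall x y, inBp x -> inBp y -> inBp (op x y).
Hypothesis eqdec : forall x y : T, {x = y} + {x <> y}.

Fixpoint allP (P : T -> Prop) (ls : seq T) : Prop :=
  if ls is L :: r then P L /\ allP P r else True.

Fixpoint evw (l : seq T) : T :=
  match l with
  | [::] => e
  | x :: l' => if l' is [::] then x else op x (op ff (evw l'))
  end.

Lemma ffK2 h : op ff (op ff h) = h.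
Proof. by rewrite opA ffK op1. Qed.

Lemma evw_cons x l : l <> [::] -> evw (x :: l) = op x (op ff (evw l)).
Proof. by case: l. Qed.

Lemma evw_cat l1 l2 : l1 <> [::] -> l2 <> [::] ->
  evw (l1 ++ l2) = op (evw l1) (op ff (evw l2)).
Proof.
elim: l1 => [|x l1 IH] //= _ ne2.
case: l1 IH => [|y l1] IH /=.
  by case: l2 {IH} ne2.
have := IH (fun H : y :: l1 = [::] => ltac:(discriminate H)) ne2; rewrite /= => ->.
by rewrite !opA.
Qed.

Lemma evw_mul l1 l2 : l1 <> [::] -> l2 <> [::] ->
  evw (l1 ++ e :: l2) = op (evw l1) (evw l2).
Proof.
move=> n1 n2; rewrite evw_cat //.
case: l2 n2 => [|y l2] //= _.
by case: l2 => [|z l2]; rewrite op1 ffK2.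
Qed.

Lemma allP_cat P l1 l2 : allP P l1 -> allP P l2 -> allP P (l1 ++ l2).
Proof. by elim: l1 => //= x l1 IH [? ?] ?; split => //; apply: IH. Qed.

Lemma inv_word l : l <> [::] -> allP inBp l -> exists l', [/\ l' <> [::], allP inBp l',
  op (evw l') (evw l) = e & op (evw l) (evw l') = e].
Proof.
elim: l => [|x l IH] // _ [Bx Bl].
have [y [By E1 E2]] := invB Bx.
case: l IH Bl => [|z l] IH Bl.
  by exists [:: y].
have ne : z :: l <> [::] by [].
have [l' [ne' Bl' F1 F2]] := IH ne Bl.
exists (l' ++ [:: y]); split => //.
- by case: (l') ne'.
- by apply: allP_cat.
- rewrite evw_cat // (evw_cons x ne) -!opA (opA y x) E2 op1.
  by rewrite ffK2 F1.
- rewrite evw_cat // (evw_cons x ne) -!opA (opA (evw (z :: l)) (evw l')) F2 op1.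
  by rewrite ffK2 E1.
Qed.

Fixpoint redt (l : seq T) : Prop :=
  match l with
  | [::] => True
  | x :: l' => if l' is [::] then True else x <> e /\ redt l'
  end.

Lemma redt_behead l : redt l -> redt (behead l).
Proof. by case: l => //= x [|y l] // [_ H]. Qed.

Lemma evw_head x z m : evw (op x z :: m) = op x (evw (z :: m)).
Proof. by case: m => //= y m; rewrite opA. Qed.

Lemma reduce l : l <> [::] -> allP inBp l -> exists l2,
  [/\ l2 <> [::], allP inBp l2, redt (behead l2) & evw l2 = evw l].
Proof.
elim: l => [|x l IH] // _ [Bx Bl].
case: l IH Bl => [|y0 l0] IH Bl; first by exists [:: x].
have ne : y0 :: l0 <> [::] by [].
have [m [nm Bm Rm Em]] := IH ne Bl.
rewrite (evw_cons x ne) -Em.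
case: m nm Bm Rm {Em} => [|y m] // _ [By Bm] /= Rm.
case: m Bm Rm => [|z m] Bm Rm.
  by exists [:: x; y].
case: (eqdec y e) => [Ey|ney].
  case: Bm => Bz Bm.
  exists (op x z :: m); split => //.
  - by split => //; apply: compB.
  - exact: (redt_behead Rm).
  - by rewrite evw_head Ey /= op1 ffK2.
exists (x :: y :: z :: m); split => //=.
Qed.

Variable sg tt : T.
Definition prA (ls : seq T) (h : T) : T := foldr (fun L acc => op sg (op L acc)) h ls.

Lemma prA_cat l1 l2 h : prA (l1 ++ l2) h = prA l1 (prA l2 h).
Proof. by rewrite /prA foldr_cat. Qed.

Lemma prA_op ls h g : op (prA ls h) g = prA ls (op h g).
Proof. by elim: ls => //= L ls IH; rewrite -!opA IH. Qed.

Variable good : T -> Prop.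
Hypothesis good_tt : good tt.
Hypothesis ffE : ff = op sg (op tt (op sg (op tt (op sg (op tt (op sg (op tt sg))))))).
Hypothesis junction : forall x, inBp x -> x <> e -> exists lsj, allP good lsj /\
  forall R, op sg (op tt (op sg (op tt (op sg (op x (op sg (op tt (op sg (op tt R))))))))) = prA lsj R.

Lemma MC l : l <> [::] -> allP inBp l -> redt l -> exists ls, allP good ls /\
  op ff (evw l) = prA (tt :: tt :: ls) (op sg (last e l)).
Proof.
elim: l => [|x l IH] // _ [Bx Bl].
case: l IH Bl => [|y l] IH Bl.
  move=> _; exists [:: tt; tt]; split => //=.
  by rewrite ffE -!opA.
move=> [nx Rl].
have [ls [Gls E]] := IH (fun H : y :: l = [::] => ltac:(discriminate H)) Bl Rl.
have [lsj [Gj Ej]] := junction Bx nx.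
exists (lsj ++ ls); split.
  exact: allP_cat.
rewrite (evw_cons x (fun H : y :: l = [::] => ltac:(discriminate H))) E /=.
rewrite ffE -!opA Ej.
by rewrite prA_cat.
Qed.
End Words.


Section G.
Variable T : Type.
Variable op : T -> T -> T.
Variable e : T.
Hypothesis opA : forall x y z, op x (op y z) = op (op x y) z.
Hypothesis op1 : forall x, op e x = x.
Hypothesis op1r : forall x, op x e = x.
Variables sg tt : T.
Hypothesis sgK : op sg sg = e.
Hypothesis ttK : op tt tt = e.

Lemma ffK_gen : let ff := op sg (op tt (op sg (op tt (op sg (op tt (op sg (op tt sg))))))) in
  op ff ff = e.
Proof.
move=> ff; rewrite /ff -!opA.
by rewrite !(opA sg sg) sgK op1 !(opA tt tt) ttK op1 !(opA sg sg) sgK op1 !(opA tt tt) ttK op1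
  !(opA sg sg) sgK op1 !(opA tt tt) ttK op1 !(opA sg sg) sgK op1 !(opA tt tt) ttK op1.
Qed.

Lemma inv2_gen (P : T -> Prop) :
  (forall x, P x -> exists y, P y /\ op x y = e) ->
  forall x, P x -> exists y, [/\ P y, op x y = e & op y x = e].
Proof.
move=> H x Px; have [y [Py E1]] := H x Px; have [z [Pz E2]] := H y Py.
exists y; split => //.
have : x = z by rewrite -[x]op1r -E2 opA E1 op1.
by move=> ->.
Qed.

Lemma J2_gen x a1 a2 : op sg (op x sg) = op a1 (op sg a2) -> forall R,
  op sg (op tt (op sg (op tt (op sg (op x (op sg (op tt (op sg (op tt R))))))))) =
  op sg (op tt (op sg (op (op tt a1) (op sg (op (op a2 tt) (op sg (op tt R))))))).
Proof.
move=> E R.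
have -> : op sg (op x (op sg (op tt (op sg (op tt R))))) =
          op (op sg (op x sg)) (op tt (op sg (op tt R))) by rewrite !opA.
by rewrite E -!opA.
Qed.

Lemma J3_gen x E TT : op sg (op x sg) = E -> op tt (op E tt) = TT -> forall R,
  op sg (op tt (op sg (op tt (op sg (op x (op sg (op tt (op sg (op tt R))))))))) =
  op sg (op tt (op sg (op TT (op sg (op tt R))))).
Proof.
move=> H1 H2 R.
have -> : op tt (op sg (op x (op sg (op tt (op sg (op tt R)))))) =
          op (op tt (op (op sg (op x sg)) tt)) (op sg (op tt R)) by rewrite !opA.
by rewrite H1 H2.
Qed.

Lemma J4_gen x E TT E' TT' : op sg (op x sg) = E -> op tt (op E tt) = TT ->
  op sg (op TT sg) = E' -> op tt (op E' tt) = TT' -> forall R,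
  op sg (op tt (op sg (op tt (op sg (op x (op sg (op tt (op sg (op tt R))))))))) =
  op sg (op TT' R).
Proof.
move=> H1 H2 H3 H4 R; rewrite (J3_gen H1 H2).
have -> : op tt (op sg (op TT (op sg (op tt R)))) = op (op tt (op (op sg (op TT sg)) tt)) R
  by rewrite !opA.
by rewrite H3 H4.
Qed.
End G.

Section S.
Variable k : fieldType.
Implicit Types (u v w : pol2 k) (h g : endo2 k) (p : {poly k}).
Definition ev (q : {poly k}) (u : pol2 k) : pol2 k := (map_poly (@mpolyC 2 k) q).[u].
Lemma polYE q : polY q = ev q (Y2 k).
Proof.
rewrite /polY /ev horner_coef size_map_poly.
by apply: eq_bigr => i _; rewrite coef_map /= mul_mpolyC.

Qed.
Lemma evD q r u : ev (q + r) u = ev q u + ev r u.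
Proof. by rewrite /ev rmorphD hornerD. Qed.
Lemma evN q u : ev (- q) u = - ev q u.
Proof. by rewrite /ev rmorphN hornerN. Qed.
Lemma evZ c q u : ev (c *: q) u = c *: ev q u.
Proof. by rewrite /ev map_polyZ hornerZ mul_mpolyC. Qed.
Lemma evC c u : ev c%:P u = c%:MP.
Proof. by rewrite /ev map_polyC hornerC. Qed.
Lemma evX u : ev 'X u = u.
Proof. by rewrite /ev map_polyX hornerX. Qed.
Lemma ev_comp r s u : ev (r \Po s) u = ev r (ev s u).
Proof. by rewrite /ev map_comp_poly horner_comp. Qed.
Lemma comp_ev (lq : 2.-tuple (pol2 k)) q u :
  comp_mpoly lq (ev q u) = ev q (comp_mpoly lq u).
Proof.
rewrite /ev -horner_map /=; congr (_.[_]); rewrite -map_poly_comp.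
by apply: eq_map_poly => c /=; rewrite comp_mpolyC.
Qed.
Lemma comp_mpolyA2 P (lq lr : 2.-tuple (pol2 k)) :
  comp_mpoly [tuple comp_mpoly lr (tnth lq ord0); comp_mpoly lr (tnth lq ord_max)] P
  = comp_mpoly lr (comp_mpoly lq P).
Proof.
rewrite (comp_mpolyEX P lq) (comp_mpolyEX P) raddf_sum; apply: eq_bigr => m _.
rewrite /= comp_mpolyZ !comp_mpolyX. congr (_ *: _).
rewrite rmorph_prod; apply: eq_bigr => i _.
rewrite rmorphXn; congr (_ ^+ _).
case: i => [[|[|i]] Hi] //=.
all: by rewrite [LHS](tnth_nth 0) /=; congr (_ \mPo _); congr tnth; apply: val_inj.
Qed.
Lemma compX (a b : pol2 k) : comp_mpoly [tuple a; b] (X2 k) = a.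
Proof. by rewrite /X2 comp_mpolyXU. Qed.
Lemma compY (a b : pol2 k) : comp_mpoly [tuple a; b] (Y2 k) = b.
Proof. by rewrite /Y2 comp_mpolyXU. Qed.

Lemma comp2A h1 h2 h3 : comp2 h1 (comp2 h2 h3) = comp2 (comp2 h1 h2) h3.
Proof.
rewrite /comp2 /=.
have E := comp_mpolyA2 _ [tuple h2.1; h2.2] [tuple h3.1; h3.2].
by rewrite !E.
Qed.

Lemma comp2_id_l h : comp2 (id2 k) h = h.
Proof. by case: h => a b; rewrite /comp2 /id2 /= compX compY. Qed.

Lemma comp2_id_r h : comp2 h (id2 k) = h.
Proof.
case: h => a b; rewrite /comp2 /id2 /=.
have -> : [tuple X2 k; Y2 k] = [tuple 'X_i | i < 2].
  by apply: eq_from_tnth => i; rewrite tnth_map tnth_ord_tuple; case: i => [[|[|i]] Hi];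
     rewrite (tnth_nth 0) //= /X2 /Y2; congr 'X__; apply: val_inj.
by rewrite !comp_mpoly_id.
Qed.

Definition mkB (a b c : k) (q : {poly k}) : endo2 k :=
  (a *: X2 k + ev q (Y2 k), b *: Y2 k + c%:MP).

Lemma comp_mkB a b c q h :
  comp2 (mkB a b c q) h = (a *: h.1 + ev q h.2, b *: h.2 + c%:MP).
Proof.
by case: h => u v; rewrite /comp2 /mkB /= !raddfD /= !comp_mpolyZ comp_ev compX compY comp_mpolyC.
Qed.

Lemma comp_sig h : comp2 (sigma2 k) h = (h.2, h.1).
Proof. by case: h => u v; rewrite /comp2 /sigma2 /= compX compY. Qed.

Lemma mkB_comp a b c q a' b' c' q' :
  comp2 (mkB a b c q) (mkB a' b' c' q') =
  mkB (a * a') (b * b') (b * c' + c) (a *: q' + (q \Po (b' *: 'X + c'%:P))).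
Proof.
rewrite comp_mkB /mkB /=; congr (_, _).
  rewrite scalerDr scalerA evD evZ ev_comp evD evZ evX evC; by rewrite addrA.
by rewrite scalerDr scalerA -addrA rmorphD /= mpolyCM mul_mpolyC.
Qed.

Lemma t_mkB (p : {poly k}) : t2 p = mkB (-1) 1 0 p.
Proof. by rewrite /t2 /mkB polYE scaleN1r scale1r addr0. Qed.

Lemma id_mkB : id2 k = mkB 1 1 0 0.
Proof.
rewrite /id2 /mkB !scale1r -(scale0r (0 : {poly k})) evZ scale0r !addr0 //.
Qed.

Lemma inB_mkB h : in_B h <-> exists (a b c : k) (q : {poly k}), [/\ a != 0, b != 0 & h = mkB a b c q].
Proof.
split.
  by case=> a [b [c [q [Ha [Hb ->]]]]]; exists a, b, c, q; rewrite /mkB polYE.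
by case=> a [b [c [q [Ha Hb ->]]]]; exists a, b, c, q; rewrite /mkB polYE.
Qed.

Lemma msize_addl u v : (msize u < msize v)%N -> msize (u + v) = msize v.
Proof.
move=> H; apply/eqP; rewrite eqn_leq; apply/andP; split.
  by apply: leq_trans (msizeD_le _ _) _; rewrite geq_max leqnn ltnW.
have E : v = (u + v) + (- u) by rewrite addrC addKr.
have := msizeD_le (u + v) (- u); rewrite -E msizeN => H2.
move: (leq_trans H2 (leqnn _)); rewrite leq_max => /orP [//|H3].
by move: (leq_ltn_trans H3 H); rewrite ltnn.
Qed.

Lemma msize_addr u v : (msize u < msize v)%N -> msize (v + u) = msize v.
Proof. by rewrite addrC; apply: msize_addl. Qed.

Lemma msizeX2 : msize (X2 k) = 2%N.
Proof. by rewrite /X2 msizeX mdeg1. Qed.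
Lemma msizeY2 : msize (Y2 k) = 2%N.
Proof. by rewrite /Y2 msizeX mdeg1. Qed.

Lemma msize_const u (lq : 2.-tuple (pol2 k)) : (msize u <= 1)%N -> comp_mpoly lq u = u.
Proof. by move=> /msize1_polyC ->; rewrite comp_mpolyC. Qed.

Lemma msize_ev q u : q != 0 -> (2 <= msize u)%N ->
  msize (ev q u) = ((size q).-1 * (msize u).-1).+1.
Proof.
move=> + Hu; elim/poly_ind: q => [|q c IH]; first by rewrite eqxx.
move=> Hq; rewrite evD evC.
have [Eq0|q0] := eqVneq q 0.
  move: Hq; rewrite Eq0 mul0r add0r polyC_eq0 => Hc.
  by rewrite /ev map_poly0 horner0 add0r msizeC size_polyC Hc.
have -> : size (q * 'X + c%:P) = (size q).+1 by rewrite size_MXaddC (negbTE q0).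
rewrite /=.
have Eq : ev (q * 'X) u = ev q u * u by rewrite /ev rmorphM /= map_polyX hornerMX.
rewrite Eq.
have nz : ev q u != 0 by rewrite -msize_poly_eq0 (IH q0).
have nzu : u != 0 by rewrite -msize_poly_eq0; case: (msize u) Hu.
rewrite msize_addr; last first.
  rewrite msizeM // (IH q0) msizeC.
  apply: (leq_ltn_trans (leq_b1 _)); rewrite addSn /=; exact: leq_trans Hu (leq_addl _ _).
rewrite (msizeM nz nzu) (IH q0).
case: (msize u) Hu => [|[|m]] //= _.
have : size q != 0%N by rewrite size_poly_eq0.
case: (size q) => [|s] //= _.
rewrite !addnS /= mulSn; lia.
Qed.

Definition good (L : endo2 k) := exists (a b c : k) (q : {poly k}),
  [/\ a != 0, b != 0, (3 <= size q)%N & L = mkB a b c q].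
Definition Qp (h : endo2 k) := (2 <= msize h.2)%N /\ (msize h.1 <= msize h.2)%N.

Lemma DS L h : good L -> Qp h ->
  Qp (comp2 (sigma2 k) (comp2 L h)) /\ (3 <= msize (comp2 (sigma2 k) (comp2 L h)).2)%N.
Proof.
case=> a [b [c [q [Ha Hb Hq ->]]]] [H1 H2].
rewrite comp_sig comp_mkB /Qp /=.
have q0 : q != 0 by rewrite -size_poly_eq0; case: (size q) Hq.
have Eb : msize (b *: h.2 + c%:MP) = msize h.2.
  rewrite msize_addr msizeZ //; rewrite msizeC; exact: leq_ltn_trans (leq_b1 _) H1.
have Eq : msize (ev q h.2) = ((size q).-1 * (msize h.2).-1).+1 by apply: msize_ev.
have Hlt : (msize h.2 < msize (ev q h.2))%N.
  rewrite Eq; move: Hq H1; case: (size q) => [|[|[|s]]] //= _.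
  case: (msize h.2) => [|[|m]] //= _; rewrite !mulSn; lia.
have Ea : msize (a *: h.1 + ev q h.2) = msize (ev q h.2).
  by rewrite msize_addl // (leq_ltn_trans (msizeZ_le _ _)) // (leq_ltn_trans H2).
rewrite Ea Eb; split; first split.
- exact: leq_trans H1 (ltnW Hlt).
- exact: ltnW.
- exact: leq_ltn_trans H1 Hlt.
Qed.


Notation prS := (prA (@comp2 k) (sigma2 k)).

Lemma chain ls h : allP good ls -> Qp h -> ls <> [::] ->
  Qp (prS ls h) /\ (3 <= msize (prS ls h).2)%N.
Proof.
elim: ls => [|L ls IH] //= [gL gls] Qh _.
case: ls IH gls => [|L2 ls] IH gls; first by apply: DS.
by apply: DS => //; case: (IH gls Qh).
Qed.

Lemma sgK : comp2 (sigma2 k) (sigma2 k) = id2 k.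
Proof. by rewrite comp_sig. Qed.

Lemma ttK p : comp2 (t2 p) (t2 p) = id2 k.
Proof.
rewrite t_mkB comp_mkB /mkB /=.
rewrite !scale1r !addr0 !scaleN1r opprD opprK addrNK.
done.
Qed.

Lemma poly_le2 (q : {poly k}) : (size q <= 2)%N -> q = q`_1 *: 'X + (q`_0)%:P.
Proof.
move=> Hs; apply/polyP => i; rewrite coefD coefZ coefX coefC.
case: i => [|[|i]] /=; rewrite ?mulr0 ?mulr1 ?add0r ?addr0 //.
by rewrite nth_default // (leq_trans Hs).
Qed.

Lemma sig_mkB_sig a b c q1 q0 :
  comp2 (sigma2 k) (comp2 (mkB a b c (q1 *: 'X + q0%:P)) (sigma2 k)) =
  (b *: X2 k + c%:MP, a *: Y2 k + (q1 *: X2 k + q0%:MP)).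
Proof. by rewrite comp_sig comp_mkB /= evD evZ evX evC. Qed.

Lemma sig_mkBC_sig a b c q0 :
  comp2 (sigma2 k) (comp2 (mkB a b c q0%:P) (sigma2 k)) = mkB b a q0 c%:P.
Proof.
have := sig_mkB_sig a b c 0 q0; rewrite scale0r add0r => ->.
by rewrite /mkB evC scale0r add0r.
Qed.

Lemma tEt p al be ga de :
  comp2 (t2 p) (comp2 (mkB al be ga de%:P) (t2 p)) =
  mkB al be ga (p \Po (be *: 'X + ga%:P) - al *: p - de%:P).
Proof.
rewrite t_mkB !mkB_comp; congr mkB.
- by rewrite mulrN1 mulN1r opprK.
- by rewrite !mulr1 mul1r.
- by rewrite mulr0 add0r mul1r addr0.
- rewrite comp_polyC scaleN1r opprD !mulr1 mulr0 add0r; by rewrite addrC addrA.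
Qed.

Lemma msize_ge2 u (lq1 lq2 : 2.-tuple (pol2 k)) :
  comp_mpoly lq1 u != comp_mpoly lq2 u -> (2 <= msize u)%N.
Proof.
apply: contraR; rewrite -ltnNge ltnS => H.
by rewrite !msize_const.
Qed.

Lemma msizeZY a : a != 0 -> msize (a *: Y2 k) = 2%N.
Proof. by move=> Ha; rewrite msizeZ // msizeY2. Qed.

Lemma ZY_neq0 a : a != 0 -> a *: Y2 k != 0.
Proof. by move=> Ha; rewrite -msize_poly_eq0 msizeZY. Qed.

Lemma Qp_sig : Qp (sigma2 k).
Proof. by rewrite /Qp /sigma2 /= msizeX2 msizeY2. Qed.

Lemma Qp_aff a b c q1 q0 : a != 0 ->
  Qp (b *: X2 k + c%:MP, a *: Y2 k + (q1 *: X2 k + q0%:MP)).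
Proof.
move=> Ha; rewrite /Qp /=.
have H2 : (2 <= msize (a *: Y2 k + (q1 *: X2 k + q0%:MP)))%N.
  apply: (@msize_ge2 _ [tuple 0; 0] [tuple 0; Y2 k]).
  rewrite !raddfD /= !comp_mpolyZ !compX !compY !comp_mpolyC !scaler0 !add0r.
  by rewrite eq_sym -subr_eq0 addrK ZY_neq0.
split => //; apply: leq_trans H2.
apply: leq_trans (msizeD_le _ _) _; rewrite geq_max msizeC.
rewrite (leq_trans (leq_b1 _)) // andbT.
by apply: leq_trans (msizeZ_le _ _) _; rewrite msizeX2.
Qed.

Lemma inB_id : @in_B k (id2 k).
Proof. by apply/inB_mkB; exists 1, 1, 0, 0; rewrite id_mkB oner_eq0. Qed.

Lemma inB_comp (x y : endo2 k) : in_B x -> in_B y -> in_B (comp2 x y).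
Proof.
move=> /inB_mkB [a [b [c [q [Ha Hb ->]]]]] /inB_mkB [a' [b' [c' [q' [Ha' Hb' ->]]]]].
apply/inB_mkB; rewrite mkB_comp; do 4 eexists; split; last reflexivity.
- by rewrite mulf_neq0.
- by rewrite mulf_neq0.
Qed.

Lemma inB_rinv (x : endo2 k) : in_B x -> exists y, in_B y /\ comp2 x y = id2 k.
Proof.
move=> /inB_mkB [a [b [c [q [Ha Hb ->]]]]].
exists (mkB a^-1 b^-1 (- (c / b)) (- (a^-1 *: (q \Po (b^-1 *: 'X + (- (c / b))%:P))))).
split.
  by apply/inB_mkB; do 4 eexists; split; last reflexivity; rewrite invr_eq0.
rewrite mkB_comp id_mkB; congr mkB.
- by rewrite mulfV.
- by rewrite mulfV.
- by rewrite mulrN mulrCA mulfV // mulr1 addNr.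
- by rewrite scalerN scalerA mulfV // scale1r addNr.
Qed.

Lemma good_t (p : {poly k}) : (3 <= size p)%N -> good (t2 p).
Proof.
move=> Hp; exists (-1), 1, 0, p; split => //; last exact: t_mkB.
- by rewrite oppr_eq0 oner_eq0.
- by rewrite oner_eq0.
Qed.

Definition hypP (p : {poly k}) := forall alpha beta gamma : k,
  (size (p - alpha *: (p \Po (beta *: 'X + gamma%:P)))%R <= 2)%N ->
  alpha = 1 /\ beta = 1 /\ gamma = 0.

Lemma size_add_big (A B : {poly k}) : (3 <= size A)%N -> (size B <= 2)%N ->
  (3 <= size (A + B)%R)%N /\ (3 <= size (B + A)%R)%N.
Proof.
move=> HA HB.
have lt : (size B < size A)%N by apply: leq_trans HA.
by rewrite size_addl // addrC size_addl.
Qed.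

Lemma size_lin (be ga : k) : (size (be *: 'X + ga%:P)%R <= 2)%N.
Proof.
apply: leq_trans (size_polyD _ _) _; rewrite geq_max; apply/andP; split.
  by apply: leq_trans (size_scale_leq _ _) _; rewrite size_polyX.
by rewrite size_polyC (leq_trans (leq_b1 _)).
Qed.

Lemma size_lin2 (be ga : k) : be != 0 -> size (be *: 'X + ga%:P) = 2%N.
Proof.
move=> Hb; rewrite size_addl ?size_scale ?size_polyX // size_polyC; by case: (ga != 0).
Qed.

Lemma size_comp_lin (p : {poly k}) (be ga : k) : be != 0 ->
  size (p \Po (be *: 'X + ga%:P)) = size p.
Proof.
move=> Hb; apply: size_comp_poly2.
by rewrite size_addl ?size_scale ?size_polyX // size_polyC; case: (ga != 0).
Qed.

Lemma lin_small (s be ga : k) : (size (s *: (be *: 'X + ga%:P)) <= 2)%N.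
Proof. exact: leq_trans (size_scale_leq _ _) (size_lin _ _). Qed.

Lemma good_mkB a b c (q : {poly k}) : a != 0 -> b != 0 -> (3 <= size q)%N -> good (mkB a b c q).
Proof. by move=> Ha Hb Hq; exists a, b, c, q. Qed.

Lemma hyp_size3 p : hypP p -> (3 <= size p)%N.
Proof.
move=> H; rewrite ltnNge; apply/negP => Hs.
have := H 0 0 0; rewrite scale0r subr0 => /(_ Hs) [E _].
by move/eqP: E; rewrite eq_sym oner_eq0.
Qed.

Opaque comp2 sigma2 t2 id2.
Lemma junction_c p x : hypP p -> in_B x -> x <> id2 k -> exists lsj, allP good lsj /\
  forall R, comp2 (sigma2 k) (comp2 (t2 p) (comp2 (sigma2 k) (comp2 (t2 p) (comp2 (sigma2 k)
    (comp2 x (comp2 (sigma2 k) (comp2 (t2 p) (comp2 (sigma2 k) (comp2 (t2 p) R))))))))) =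
    prS lsj R.
Proof.
move=> Hp /inB_mkB [a [b [c [q [Ha Hb Ex]]]]] nx.
have Sp := hyp_size3 Hp.
have gt := good_t Sp.
case: (leqP 3 (size q)) => Hq.
  exists [:: t2 p; t2 p; x; t2 p; t2 p]; split; last by move=> R.
  rewrite /= Ex; split; first exact: gt; split; first exact: gt.
  by split; [apply: good_mkB | split; [exact: gt | split]].
have Eq := poly_le2 (Hq : (size q <= 2)%N).
move: Eq; move: (q`_1) (q`_0) => q1 q0 Eq.
case: (eqVneq q1 0) => Hq1; last first.
  pose r := b / q1.
  have Er : b = r * q1 by rewrite /r mulfVK.
  pose a1 := mkB (- (a * r)) 1 q0 (r *: 'X + c%:P).
  pose a2 := mkB q1 1 0 (a *: 'X).
  have S1 : comp2 (sigma2 k) (comp2 x (sigma2 k)) = comp2 a1 (comp2 (sigma2 k) a2).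
    rewrite Ex Eq sig_mkB_sig /a1 /a2.
    rewrite (comp_sig (mkB q1 1 0 (a *: 'X))) comp_mkB /mkB /=.
    rewrite !(evD, evZ, evX, evC) Er.
    congr (_, _); rewrite -!mul_mpolyC; ring.
  have rne : r != 0.
    Time apply: mulf_neq0. Time exact: Hb. Time by rewrite invr_eq0.
  exists [:: t2 p; comp2 (t2 p) a1; comp2 a2 (t2 p); t2 p]; split.
    split; first exact: gt.
    split.
      rewrite t_mkB /a1 mkB_comp; apply: good_mkB.
      - Time rewrite mulN1r opprK. Time apply: mulf_neq0. Time exact: Ha. Time exact: rne.
      - by rewrite mulr1 oner_eq0.
      - apply: (proj2 (size_add_big _ _)).
          rewrite size_comp_poly2; [exact: Sp | exact: (size_lin2 _ (oner_neq0 k))].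
        exact: lin_small.
    split.
      rewrite t_mkB /a2 mkB_comp; apply: good_mkB.
      - by rewrite mulrN1 oppr_eq0.
      - by rewrite mulr1 oner_eq0.
      - have H3 : (3 <= size (q1 *: p))%N by rewrite (size_scale _ Hq1).
        have H2 : (size ((a *: 'X) \Po (1 *: 'X + 0%:P)) <= 2)%N.
          rewrite comp_polyZ comp_polyX; exact: lin_small.
        exact: (proj1 (size_add_big H3 H2)).
    split; first exact: gt.
    exact: I.
  move=> R; rewrite (J2_gen comp2A (t2 p) S1 R); reflexivity.
move: Eq; rewrite Hq1 scale0r add0r => Eq.
pose E := mkB b a q0 c%:P.
have S2 : comp2 (sigma2 k) (comp2 x (sigma2 k)) = E by rewrite Ex Eq sig_mkBC_sig.
pose rT := p \Po (a *: 'X + q0%:P) - b *: p - c%:P.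
have T2e : comp2 (t2 p) (comp2 E (t2 p)) = mkB b a q0 rT by rewrite /E tEt.
case: (leqP 3 (size rT)) => HrT.
  exists [:: t2 p; mkB b a q0 rT; t2 p]; split.
    split; first exact: gt.
    split; first exact: good_mkB.
    split; first exact: gt.
    exact: I.
  move=> R; rewrite (J3_gen comp2A S2 T2e R); reflexivity.
have Hs : (size (p - b^-1 *: (p \Po (a *: 'X + q0%:P)))%R <= 2)%N.
  have -> : p - b^-1 *: (p \Po (a *: 'X + q0%:P)) = - b^-1 *: (rT + c%:P).
    rewrite /rT subrK scalerBr !scaleNr scalerA (mulVf Hb) scale1r opprK addrC.
    done.
  apply: leq_trans (size_scale_leq _ _) _.
  apply: leq_trans (size_polyD _ _) _; rewrite geq_max; apply/andP; split.
    by rewrite -ltnS.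
  by rewrite size_polyC (leq_trans (leq_b1 _)).
have [Hb1 [Ha1 Hq01]] := Hp _ _ _ Hs.
have Hb1' : b = 1 by rewrite -[b]invrK Hb1 invr1.
subst a q0 b.
have ErT : rT = (- c)%:P.
  by rewrite /rT polyC0 addr0 !scale1r comp_polyXr subrr sub0r polyCN.
rewrite ErT in T2e.
have S3 : comp2 (sigma2 k) (comp2 (mkB 1 1 0 (- c)%:P) (sigma2 k)) = mkB 1 1 (- c) 0%:P.
  exact: sig_mkBC_sig.
pose rT' := p \Po (1 *: 'X + (- c)%:P) - 1 *: p - 0%:P.
have T4 : comp2 (t2 p) (comp2 (mkB 1 1 (- c) 0%:P) (t2 p)) = mkB 1 1 (- c) rT' by rewrite tEt.
case: (leqP 3 (size rT')) => HrT'.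
  exists [:: mkB 1 1 (- c) rT']; split.
    split; last exact: I.
    by apply: good_mkB; [exact: oner_neq0 | exact: oner_neq0 | exact: HrT'].
  move=> R; rewrite (J4_gen comp2A S2 T2e S3 T4 R); reflexivity.
have Hs' : (size (p - 1 *: (p \Po (1 *: 'X + (- c)%:P)))%R <= 2)%N.
  have -> : p - 1 *: (p \Po (1 *: 'X + (- c)%:P)) = - rT'.
    by rewrite /rT' polyC0 subr0 !scale1r opprB.
  by rewrite size_opp -ltnS.
have [_ [_ Hc]] := Hp _ _ _ Hs'.
have Hc0 : c = 0 by rewrite -[c]opprK Hc oppr0.
subst c.
exfalso; apply: nx; rewrite Ex Eq id_mkB polyC0; reflexivity.
Qed.

Lemma ffE p : f44 p = comp2 (sigma2 k) (comp2 (t2 p) (comp2 (sigma2 k) (comp2 (t2 p)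
  (comp2 (sigma2 k) (comp2 (t2 p) (comp2 (sigma2 k) (comp2 (t2 p) (sigma2 k)))))))).
Proof. rewrite /f44 /= -!comp2A; reflexivity. Qed.

Lemma ffK p : comp2 (f44 p) (f44 p) = id2 k.
Proof. rewrite ffE; exact: (ffK_gen comp2A comp2_id_l sgK (ttK p)). Qed.

Lemma invB_c (x : endo2 k) : in_B x -> exists y, [/\ in_B y, comp2 x y = id2 k & comp2 y x = id2 k].
Proof. exact: (inv2_gen comp2A comp2_id_l comp2_id_r inB_rinv). Qed.

Lemma gen_words_c p h : gen2 (fun g => in_B g \/ g = f44 p) h ->
  exists l, [/\ l <> [::], allP (@in_B k) l & evw (@comp2 k) (id2 k) (f44 p) l = h].
Proof.
elim=> {h}.
- move=> h [Bh|->]; first by exists [:: h].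
  exists [:: id2 k; id2 k]; split.
  + by [].
  + split; first exact: inB_id. split; first exact: inB_id. exact: I.
  + rewrite /=. rewrite comp2_id_l comp2_id_r; reflexivity.
- exists [:: id2 k]; split; [by [] | split; [exact: inB_id | exact: I] | reflexivity].
- move=> g h _ [l1 [n1 B1 <-]] _ [l2 [n2 B2 <-]].
  exists (l1 ++ id2 k :: l2); split.
  + by case: (l1) n1.
  + apply: allP_cat => //; split; [exact: inB_id | exact: B2].
  + exact: (evw_mul comp2A comp2_id_l (ffK p)).
- move=> h g _ [l [n Bl <-]] [G1 G2].
  have [l' [n' Bl' F1 F2]] := inv_word comp2A comp2_id_l (ffK p) invB_c n Bl.
  exists l'; split; [exact: n' | exact: Bl' |].
  have E : g = comp2 (comp2 g (evw (@comp2 k) (id2 k) (f44 p) l)) (evw (@comp2 k) (id2 k) (f44 p) l').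
    by rewrite -comp2A F2 comp2_id_r.
  by rewrite E G1 comp2_id_l.
Qed.

Lemma allP_last P (l : seq (endo2 k)) x : allP P l -> P x -> P (last x l).
Proof. by elim: l x => //= y l IH x [Py Pl] _; apply: IH. Qed.

Lemma notB_sig : ~ in_B (sigma2 k).
Proof.
Transparent sigma2.
move=> /inB_mkB [a [b [c [q [Ha Hb E]]]]].
have E2 : b *: Y2 k + c%:MP = X2 k by move: E; rewrite /mkB /sigma2 => -[_ ->].
have := congr1 (comp_mpoly [tuple 0; Y2 k]) E2.
rewrite raddfD /= comp_mpolyZ compX compY comp_mpolyC => /eqP.
rewrite -msize_poly_eq0 msize_addr msizeZ // msizeY2 // msizeC.
exact: leq_ltn_trans (leq_b1 _) _.
Qed.
Opaque sigma2.

Lemma comp_not_id (b0 V : endo2 k) : in_B b0 -> (3 <= msize V.2)%N -> comp2 b0 V <> id2 k.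
Proof.
move=> /inB_mkB [a [b [c [q [Ha Hb ->]]]]] HV.
Transparent id2.
rewrite comp_mkB /id2 => -[_ E].
have := congr1 (fun u => msize u) E; rewrite /= msizeY2 msize_addr msizeZ //.
  by move=> E'; rewrite E' in HV.
rewrite msizeC; apply: leq_ltn_trans (leq_b1 _) _; exact: leq_trans _ HV.
Qed.
Opaque id2.

Lemma main_c p : hypP p -> ~ gen2 (fun g => in_B g \/ g = f44 p) (sigma2 k).
Proof.
move=> Hp G.
have [l [nl Bl El]] := gen_words_c G.
have [l2 [n2 B2 R2 E2]] := reduce comp2A comp2_id_l (ffK p) inB_comp (@eq_comparable _) nl Bl.
rewrite El in E2.
case: l2 n2 B2 R2 E2 => [|b0 l0] // _ [Bb0 Bl0] /= R0.
case: l0 Bl0 R0 => [|y l0] Bl0 R0.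
  by move=> E; apply: notB_sig; rewrite -E.
have ny : y :: l0 <> [::] by [].
have [ls [Gls EM]] := MC comp2A (good_t (hyp_size3 Hp)) (ffE p) (fun x => @junction_c p x Hp) ny Bl0 R0.
move=> E.
have Ebk : in_B (seq.last (id2 k) (y :: l0)) by apply: allP_last => //; exact: inB_id.
move: EM Ebk E; move: (seq.last (id2 k) (y :: l0)) => bk EM Ebk E.
have E1 : comp2 b0 (prS (t2 p :: t2 p :: ls) (comp2 (sigma2 k) (comp2 bk (sigma2 k)))) = id2 k.
  rewrite (comp2A (sigma2 k) bk (sigma2 k)) -(prA_op comp2A) -EM comp2A.
  have E' : comp2 b0 (comp2 (f44 p) (evw (@comp2 k) (id2 k) (f44 p) (y :: l0))) = sigma2 k.
    exact: E.
  rewrite E'; exact: sgK.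
have gL : allP good (t2 p :: t2 p :: ls).
  split; first exact: good_t (hyp_size3 Hp).
  split; first exact: good_t (hyp_size3 Hp).
  exact: Gls.
move: Ebk => /inB_mkB [a [b [c [q [Ha Hb Ebk]]]]].
case: (leqP 3 (size q)) => Hq.
  have gL' : allP good ((t2 p :: t2 p :: ls) ++ [:: bk]).
    apply: allP_cat; first exact: gL.
    split; last exact: I.
    by rewrite Ebk; apply: good_mkB.
  have := chain gL' Qp_sig (fun H => ltac:(discriminate H)).
  rewrite (prA_cat (@comp2 k) (sigma2 k)) => -[_ H3].
  exact: (comp_not_id Bb0 H3 E1).
have Eq := poly_le2 (Hq : (size q <= 2)%N).
move: Eq; move: (q`_1) (q`_0) => q1 q0 Eq.
rewrite Ebk Eq sig_mkB_sig in E1.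
have := chain gL (Qp_aff b c q1 q0 Ha) (fun H => ltac:(discriminate H)) => -[_ H3].
exact: (comp_not_id Bb0 H3 E1).
Qed.
End S.

Theorem proposition4p4 (k : fieldType) (p : {poly k}) :
  (forall alpha beta gamma : k,
     (size (p - alpha *: (p \Po (beta *: 'X + gamma%:P)))%R <= 2)%N ->
     alpha = 1 /\ beta = 1 /\ gamma = 0) ->
  exists h : endo2 k, is_aut2 h /\
    ~ gen2 (fun g => in_B g \/ g = f44 p) h.
Proof.
move=> Hp; exists (sigma2 k); split.
  by exists (sigma2 k); split; exact: sgK.
exact: main_c Hp.
Qed.
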